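(* Let $F:\mathbb{P}(n)\to\mathbb{P}(n)$, $F(\Sigma)=I*\Sigma$. Then the maximum and minimum eigenvalues of $F(\Sigma)$ are monotone in $\Sigma$: if $\Sigma_1,\Sigma_2\in\mathbb{P}(n)$ with $\Sigma_1\preceq\Sigma_2$, then $\lambda_{\max}(I*\Sigma_1)\le\lambda_{\max}(I*\Sigma_2)$ and $\lambda_{\min}(I*\Sigma_1)\le\lambda_{\min}(I*\Sigma_2)$.
   Context: $\mathbb{P}(n)$ denotes the cone of $n\times n$ positive definite Hermitian matrices and $\preceq$ is the Löwner order ($A\preceq B$ iff $B-A$ is positive semidefinite). For $A,B\in\mathbb{P}(n)$, with $\lambda_{\max},\lambda_{\min}$ the largest and smallest eigenvalues of $BA^{-1}$, define $A*B=\frac{1}{\sqrt{\lambda_{\min}}+\sqrt{\lambda_{\max}}}\left(B+\sqrt{\lambda_{\min}\lambda_{\max}}\,A\right)$. *)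

(* Defs.v *)
(* Complex scalars: an arbitrary numClosedFieldType C
   (e.g. algC, or complex R for R : rcfType). *)
From Stdlib Require Import ClassicalEpsilon.
From mathcomp Require Import all_boot all_order all_algebra.
From mathcomp Require Import sesquilinear spectral.
Set Implicit Arguments. Unset Strict Implicit. Unset Printing Implicit Defensive.
Import Order.TTheory GRing.Theory Num.Theory.
Local Open Scope ring_scope.
Local Open Scope sesquilinear_scope.

Definition ctrmx {C : numClosedFieldType} {n : nat} (A : 'M[C]_n) : 'M[C]_n :=
  A ^t*.

Definition hermitian_mx {C : numClosedFieldType} {n : nat} (A : 'M[C]_n) : Prop :=
  ctrmx A = A.

Definition qform {C : numClosedFieldType} {n : nat} (A : 'M[C]_n) (v : 'rV[C]_n) : C :=
  (v *m A *m v ^t*) 0 0.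

Definition posdef {C : numClosedFieldType} {n : nat} (A : 'M[C]_n) : Prop :=
  hermitian_mx A /\ forall v : 'rV[C]_n, v != 0 -> 0 < qform A v.

Definition psd {C : numClosedFieldType} {n : nat} (A : 'M[C]_n) : Prop :=
  hermitian_mx A /\ forall v : 'rV[C]_n, 0 <= qform A v.

Definition loewner_le {C : numClosedFieldType} {n : nat} (A B : 'M[C]_n) : Prop :=
  psd (B - A).

Definition is_lambda_max {C : numClosedFieldType} {n : nat} (M : 'M[C]_n) (l : C) : Prop :=
  eigenvalue M l /\ forall m, eigenvalue M m -> m <= l.
Definition is_lambda_min {C : numClosedFieldType} {n : nat} (M : 'M[C]_n) (l : C) : Prop :=
  eigenvalue M l /\ forall m, eigenvalue M m -> l <= m.

Definition lambda_max {C : numClosedFieldType} {n : nat} (M : 'M[C]_n) : C :=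
  epsilon (inhabits 0) (is_lambda_max M).
Definition lambda_min {C : numClosedFieldType} {n : nat} (M : 'M[C]_n) : C :=
  epsilon (inhabits 0) (is_lambda_min M).

Definition star {C : numClosedFieldType} {n : nat} (A B : 'M[C]_n) : 'M[C]_n :=
  let M := B *m invmx A in
  let lmin := lambda_min M in
  let lmax := lambda_max M in
  (sqrtC lmin + sqrtC lmax)^-1 *: (B + sqrtC (lmin * lmax) *: A).

(* Main.v *)
Require Import Defs.
From mathcomp Require Import all_boot all_order all_algebra.
From mathcomp Require Import sesquilinear spectral.
From Stdlib Require Import ClassicalEpsilon.
From mathcomp Require Import ring.
Set Implicit Arguments. Unset Strict Implicit. Unset Printing Implicit Defensive.
Import Order.TTheory GRing.Theory Num.Theory.
Local Open Scope ring_scope.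
Local Open Scope sesquilinear_scope.

Lemma alg1 (C : numClosedFieldType) (x y : C) : x + y != 0 -> (x + y)^-1 * (y ^+ 2 + x * y) = y.
Proof. move=> h. field. exact h. Qed.
Lemma alg2 (C : numClosedFieldType) (x y : C) : x + y != 0 -> (x + y)^-1 * (x ^+ 2 + x * y) = x.
Proof. move=> h. field. exact h. Qed.

Section S.
Variable C : numClosedFieldType.
Variable n : nat.
Implicit Types A : 'M[C]_n.

Definition nrm (v : 'rV[C]_n) : C := (v *m v ^t*) 0 0.

Lemma nrmE (v : 'rV[C]_n) : nrm v = \sum_j (v 0 j * (v 0 j)^*).
Proof. by rewrite /nrm mxE; apply: eq_bigr => j _; rewrite !mxE. Qed.

Lemma rayleigh A : A ^t* = A -> forall v : 'rV[C]_n,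
  let w := v *m (spectralmx A)^t* in
  qform A v = \sum_j spectral_diag A 0 j * (w 0 j * (w 0 j)^*) /\
  nrm v = \sum_j (w 0 j * (w 0 j)^*).
Proof.
move=> hA v w.
set P := spectralmx A; set d := spectral_diag A.
have PU : P \is unitarymx by apply: spectral_unitarymx.
have Anorm : A \is normalmx by apply/normalmxP; rewrite hA.
have Aeq : A = P^t* *m diag_mx d *m P.
  by rewrite -invmx_unitary //; apply/orthomx_spectralP.
have Pv : P *m v^t* = w^t*.
  by rewrite /w trmx_mul map_mxM trmxCK.
split.
  rewrite /qform Aeq !mulmxA -/w -(mulmxA _ P) Pv mul_mx_diag mxE.
  by apply: eq_bigr => j _; rewrite !mxE mulrCA mulrA.
rewrite -nrmE /nrm -{1}(mulmxKtV v PU) // -/w -mulmxA Pv //.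
Qed.

Lemma nrm_gt0 (v : 'rV[C]_n) : v != 0 -> 0 < nrm v.
Proof.
move=> vn0; rewrite nrmE lt0r sumr_ge0 ?andbT; last by move=> j _; apply: mul_conjC_ge0.
apply: contra vn0 => /eqP H; apply/eqP/rowP => j; rewrite mxE.
have := psumr_eq0P (fun j _ => mul_conjC_ge0 (v 0 j)) H (i:=j) isT.
by move/eqP; rewrite mul_conjC_eq0 => /eqP.
Qed.

Lemma nrm_ge0 (v : 'rV[C]_n) : 0 <= nrm v.
Proof. by rewrite nrmE sumr_ge0 // => j _; apply: mul_conjC_ge0. Qed.

Lemma diag_eigen A : A ^t* = A -> forall i, eigenvalue A (spectral_diag A 0 i).
Proof.
move=> hA i; set P := spectralmx A; set d := spectral_diag A.
have PU : P \is unitarymx by apply: spectral_unitarymx.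
have Anorm : A \is normalmx by apply/normalmxP; rewrite hA.
have Aeq : A = P^t* *m diag_mx d *m P.
  by rewrite -invmx_unitary //; apply/orthomx_spectralP.
apply/eigenvalueP; exists (delta_mx 0 i *m P).
  rewrite Aeq !mulmxA mulmxtVK // mul_mx_diag scalemxAl. congr (_ *m _).
  by apply/rowP => j; rewrite !mxE eqxx /=; case: eqP => [->|]; rewrite ?mulr1 ?mul1r ?mulr0 ?mul0r.
apply/eqP => H; have := congr1 (fun M => M *m P^t*) H.
rewrite mulmxtVK // mul0mx => /rowP /(_ i); rewrite !mxE !eqxx /=.
by move/eqP; rewrite oner_eq0.
Qed.

Lemma posdef_eigen_gt0 A a : posdef A -> eigenvalue A a -> 0 < a.
Proof.
move=> [_ hA] /eigenvalueP [v va vn0].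
have := hA v vn0; rewrite /qform va -scalemxAl mxE.
by rewrite pmulr_lgt0 // nrm_gt0.
Qed.


Lemma ex_max_seq (T : eqType) (f : T -> C) x0 (s : seq T) :
  (forall x, f x \is Num.real) ->
  exists2 i, i \in x0 :: s & forall j, j \in x0 :: s -> f j <= f i.
Proof.
move=> hr; elim: s => [|y s [i si hi]].
  by exists x0; rewrite ?mem_head // => j; rewrite inE => /eqP ->.
case/orP: (real_leVge (hr i) (hr y)) => h.
  exists y; first by rewrite !inE eqxx orbT.
  move=> j; rewrite !inE => /or3P [/eqP->|/eqP->|js] //.
    by apply: le_trans h; apply: hi; rewrite mem_head.
  by apply: le_trans h; apply: hi; rewrite inE js orbT.
exists i; first by move: si; rewrite !inE => /orP [->|->]; rewrite ?orbT.
move=> j; rewrite !inE => /or3P [/eqP->|/eqP->|js] //.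
  by apply: hi; rewrite mem_head.
by apply: hi; rewrite inE js orbT.
Qed.

Lemma ex_max_ord (f : 'I_n -> C) : (0 < n)%N -> (forall x, f x \is Num.real) ->
  exists i, forall j, f j <= f i.
Proof.
move=> n0 hr; have [i _ hi] := ex_max_seq (Ordinal n0) (enum 'I_n) hr.
by exists i => j; apply: hi; rewrite inE mem_enum orbT.
Qed.

Lemma eig_qform A v m : v *m A = m *: v -> qform A v = m * nrm v.
Proof. by move=> va; rewrite /qform va -scalemxAl mxE. Qed.

Lemma spec A : (0 < n)%N -> posdef A -> exists lmin, exists lmax,
  [/\ is_lambda_min A lmin, is_lambda_max A lmax, 0 < lmin &
   forall v, lmin * nrm v <= qform A v /\ qform A v <= lmax * nrm v].
Proof.
move=> n0 Apd; have hA : A ^t* = A by case: Apd.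
set d := spectral_diag A.
have dpos i : 0 < d 0 i by apply: (posdef_eigen_gt0 Apd); apply: diag_eigen.
have [imax hmax] := @ex_max_ord (fun i => d 0 i) n0 (fun i => gtr0_real (dpos i)).
have [imin hmin] := @ex_max_ord (fun i => - d 0 i) n0
   (fun i => etrans (realN _) (gtr0_real (dpos i))).
have ray v : d 0 imin * nrm v <= qform A v /\ qform A v <= d 0 imax * nrm v.
  have [-> ->] := rayleigh hA v; rewrite !mulr_sumr; split; apply: ler_sum => j _.
    by apply: ler_wpM2r; [apply: mul_conjC_ge0 | rewrite -lerN2; apply: hmin].
  by apply: ler_wpM2r; [apply: mul_conjC_ge0 | apply: hmax].
exists (d 0 imin), (d 0 imax); split => //.
- split; first exact: diag_eigen.
  move=> m /eigenvalueP [v va vn0]; rewrite -(ler_pM2r (nrm_gt0 vn0)).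
  by rewrite -(eig_qform va); case: (ray v).
- split; first exact: diag_eigen.
  move=> m /eigenvalueP [v va vn0]; rewrite -(ler_pM2r (nrm_gt0 vn0)).
  by rewrite -(eig_qform va); case: (ray v).
Qed.


Lemma lmax_eq A l : is_lambda_max A l -> lambda_max A = l.
Proof.
move=> H; have := epsilon_spec (inhabits 0) (is_lambda_max A) (ex_intro _ l H).
rewrite -/(lambda_max A) => -[e1 h1]; case: H => e2 h2.
by apply/le_anti; rewrite h2 // h1.
Qed.

Lemma lmin_eq A l : is_lambda_min A l -> lambda_min A = l.
Proof.
move=> H; have := epsilon_spec (inhabits 0) (is_lambda_min A) (ex_intro _ l H).
rewrite -/(lambda_min A) => -[e1 h1]; case: H => e2 h2.
by apply/le_anti; rewrite h2 // h1.
Qed.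

Lemma affine_eig A c s (v : 'rV[C]_n) m : c != 0 ->
  v *m (c *: (A + s *: 1%:M)) = m *: v <-> v *m A = (m / c - s) *: v.
Proof.
move=> cn0.
have E : v *m (c *: (A + s *: 1%:M)) = c *: (v *m A + s *: v).
  by rewrite -scalemxAr mulmxDr -scalemxAr mulmx1.
rewrite E; split => H.
  have := congr1 (fun x => c^-1 *: x) H; rewrite !scalerA mulVf // scale1r.
  by move=> H1; rewrite scalerBl mulrC -H1 addrK.
by rewrite H -scalerDl subrK scalerA mulrC divfK.
Qed.

Lemma affine_max A l c s : 0 < c -> is_lambda_max A l ->
  is_lambda_max (c *: (A + s *: 1%:M)) (c * (l + s)).
Proof.
move=> c0 [e h]; have cn0 : c != 0 by rewrite gt_eqF.
split.
  move/eigenvalueP: e => [v va vn0]; apply/eigenvalueP; exists v => //.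
  by apply/affine_eig => //; rewrite mulrC mulKf // addrK.
move=> m /eigenvalueP [v /(affine_eig _ _ _ _ cn0) va vn0].
have : m / c - s <= l by apply: h; apply/eigenvalueP; exists v.
rewrite -(lerD2r s) subrK -(ler_pM2l c0) mulrC divfK //.
Qed.

Lemma affine_min A l c s : 0 < c -> is_lambda_min A l ->
  is_lambda_min (c *: (A + s *: 1%:M)) (c * (l + s)).
Proof.
move=> c0 [e h]; have cn0 : c != 0 by rewrite gt_eqF.
split.
  move/eigenvalueP: e => [v va vn0]; apply/eigenvalueP; exists v => //.
  by apply/affine_eig => //; rewrite mulrC mulKf // addrK.
move=> m /eigenvalueP [v /(affine_eig _ _ _ _ cn0) va vn0].
have : l <= m / c - s by apply: h; apply/eigenvalueP; exists v.
rewrite -(lerD2r s) subrK -(ler_pM2l c0) [X in _ <= X]mulrC divfK //.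
Qed.


Lemma qform_mono A B (v : 'rV[C]_n) : loewner_le A B -> qform A v <= qform B v.
Proof.
move=> [_ h]; have := h v; rewrite /qform mulmxBr mulmxBl !mxE.
by rewrite subr_ge0.
Qed.

Lemma star_alg (a b : C) : 0 < a -> 0 < b ->
  (sqrtC a + sqrtC b)^-1 * (b + sqrtC (a * b)) = sqrtC b /\
  (sqrtC a + sqrtC b)^-1 * (a + sqrtC (a * b)) = sqrtC a.
Proof.
move=> a0 b0; rewrite sqrtCM ?qualifE /= ?ltW //.
have xa := sqrtCK a; have yb := sqrtCK b.
have x0 : 0 < sqrtC a by rewrite sqrtC_gt0.
have y0 : 0 < sqrtC b by rewrite sqrtC_gt0.
have s0 : sqrtC a + sqrtC b != 0 by rewrite gt_eqF // addr_gt0.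
by split; [have := alg1 s0; rewrite yb | have := alg2 s0; rewrite xa].
Qed.

Lemma star_I_props S : (0 < n)%N -> posdef S -> exists a b,
  [/\ 0 < a, 0 < b, is_lambda_min S a, is_lambda_max S b &
      (lambda_max (star 1%:M S) = sqrtC b /\ lambda_min (star 1%:M S) = sqrtC a)]
  /\ forall v, a * nrm v <= qform S v /\ qform S v <= b * nrm v.
Proof.
move=> n0 Spd; have [a [b [ha hb a0 R]]] := spec n0 Spd.
have b0 : 0 < b by apply: (posdef_eigen_gt0 Spd); case: hb.
exists a, b; split; last exact R. split; [exact a0 | exact b0 | exact ha | exact hb | split].
  have cpos : 0 < (sqrtC a + sqrtC b)^-1 by rewrite invr_gt0 addr_gt0 // sqrtC_gt0.
  rewrite /star invmx1 mulmx1 (lmin_eq ha) (lmax_eq hb).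
  rewrite (lmax_eq (affine_max (sqrtC (a*b)) cpos hb)); exact: (star_alg a0 b0).1.
have cpos : 0 < (sqrtC a + sqrtC b)^-1 by rewrite invr_gt0 addr_gt0 // sqrtC_gt0.
rewrite /star invmx1 mulmx1 (lmin_eq ha) (lmax_eq hb).
rewrite (lmin_eq (affine_min (sqrtC (a*b)) cpos ha)); exact: (star_alg a0 b0).2.
Qed.

End S.

Theorem proposition4 (C : numClosedFieldType) (n : nat) (n_gt0 : (0 < n)%N)
  (S1 S2 : 'M[C]_n) :
  posdef S1 -> posdef S2 -> loewner_le S1 S2 ->
  lambda_max (star 1%:M S1) <= lambda_max (star 1%:M S2) /\
  lambda_min (star 1%:M S1) <= lambda_min (star 1%:M S2).
Proof.
move=> P1 P2 L.
have [a1 [b1 [[a10 b10 ha1 hb1 [-> ->]] R1]]] := star_I_props n_gt0 P1.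
have [a2 [b2 [[a20 b20 ha2 hb2 [-> ->]] R2]]] := star_I_props n_gt0 P2.
have nn x : 0 < x -> x \is Num.nneg by move=> h; rewrite qualifE /= ltW.
split; rewrite ler_sqrtC ?nn //.
  case: hb1 => /eigenvalueP [v va vn0] _.
  rewrite -(ler_pM2r (nrm_gt0 vn0)) -(eig_qform va).
  apply: le_trans (qform_mono v L) _.
  by case: (R2 v).
case: ha2 => /eigenvalueP [v va vn0] _.
rewrite -(ler_pM2r (nrm_gt0 vn0)) -(eig_qform va).
apply: le_trans (qform_mono v L).
by case: (R1 v).
Qed.
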